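(* Let $X$ be a rack and let $\mathcal T_2=\{0,1\}$ be the trivial rack on two elements. Then the pair $(X,\mathcal T_2)$ is productive, i.e. the homomorphism $\Gamma'_{X\times\mathcal T_2}\to\Gamma'_X\times\Gamma'_{\mathcal T_2}$ induced on commutator subgroups by the natural homomorphism $\Gamma_{X\times\mathcal T_2}\to\Gamma_X\times\Gamma_{\mathcal T_2}$ is injective.
   Context: A rack is a set $X$ with an operation $x^y$ such that $x\mapsto x^y$ is bijective for each $y$ and $(z^x)^y=(z^y)^{x^y}$. The trivial rack $\mathcal T_2$ has $a^b=a$. The product rack $X\times Y$ has $(x,a)^{(y,b)}=(x^y,a^b)$. The structure group is $\Gamma_X=\langle X\mid y^{-1}xy=x^y\text{ for all }x,y\in X\rangle$, functorial in rack morphisms; $\Gamma'$ denotes the commutator subgroup. *)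

(* Defs.v *)
From mathcomp Require Import all_boot.
Set Implicit Arguments. Unset Strict Implicit. Unset Printing Implicit Defensive.

Definition is_rack (X : Type) (op : X -> X -> X) : Prop :=
  (forall y, bijective (fun x => op x y)) /\
  (forall x y z, op (op z x) y = op (op z y) (op x y)).

Definition trivial_op (a b : bool) : bool := a.

Definition prod_op (X Y : Type) (opX : X -> X -> X) (opY : Y -> Y -> Y)
  (p q : X * Y) : X * Y := (opX p.1 q.1, opY p.2 q.2).

(* Words in the free group on X: a letter (x, false) is x, (x, true) is x^-1. *)
Definition word (X : Type) := seq (X * bool).

Definition winv (X : Type) (w : word X) : word X :=
  rev (map (fun l => (l.1, ~~ l.2)) w).

Definition wcomm (X : Type) (u v : word X) : word X :=
  winv u ++ winv v ++ u ++ v.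

(* The structure group Gamma_X = < X | y^-1 x y = x^y > : two words are equal
   in Gamma_X iff they are related by the congruence generated by free
   cancellation and the defining relations. *)
Inductive gamma_eq (X : Type) (op : X -> X -> X) : word X -> word X -> Prop :=
| geq_refl w : gamma_eq op w w
| geq_sym u v : gamma_eq op u v -> gamma_eq op v u
| geq_trans u v w : gamma_eq op u v -> gamma_eq op v w -> gamma_eq op u w
| geq_ctx a b u v : gamma_eq op u v -> gamma_eq op (a ++ u ++ b) (a ++ v ++ b)
| geq_cancel x s : gamma_eq op [:: (x, s); (x, ~~ s)] [::]
| geq_rel x y : gamma_eq op [:: (y, true); (x, false); (y, false)] [:: (op x y, false)].

Inductive in_comm (X : Type) (op : X -> X -> X) : word X -> Prop :=
| comm_one : in_comm op [::]
| comm_gen u v : in_comm op (wcomm u v)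
| comm_mul u v : in_comm op u -> in_comm op v -> in_comm op (u ++ v)
| comm_inv u : in_comm op u -> in_comm op (winv u)
| comm_eq u v : gamma_eq op u v -> in_comm op u -> in_comm op v.

Definition wmap (X Y : Type) (f : X -> Y) (w : word X) : word Y :=
  map (fun l => (f l.1, l.2)) w.

(* Main.v *)
Require Import Defs.
From mathcomp Require Import all_boot.
Set Implicit Arguments. Unset Strict Implicit. Unset Printing Implicit Defensive.

Section Gen.
Variables (Y : Type) (o : Y -> Y -> Y).
Local Notation G := (gamma_eq o).

Lemma Gt u v w : G u v -> G v w -> G u w.
Proof. exact: geq_trans. Qed.
Lemma Gs u v : G u v -> G v u.
Proof. exact: geq_sym. Qed.

Lemma G_catl a u v : G u v -> G (a ++ u) (a ++ v).
Proof. by move=> H; have := geq_ctx a [::] H; rewrite !cats0. Qed.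
Lemma G_catr b u v : G u v -> G (u ++ b) (v ++ b).
Proof. by move=> H; exact: (geq_ctx [::] b H). Qed.
Lemma G_cat u v u' v' : G u u' -> G v v' -> G (u ++ v) (u' ++ v').
Proof. move=> H1 H2; apply: Gt (G_catr _ H1) (G_catl _ H2). Qed.

Lemma winv_cons (l : Y * bool) (w : word Y) : winv (l :: w) = winv w ++ [:: (l.1, ~~ l.2)].
Proof. by rewrite /winv /= rev_cons cats1. Qed.
Lemma winv_cat (u v : word Y) : winv (u ++ v) = winv v ++ winv u.
Proof. by rewrite /winv map_cat rev_cat. Qed.

Lemma canc x s : G [:: (x, s); (x, ~~ s)] [::].
Proof. exact: geq_cancel. Qed.
Lemma canc' x s : G [:: (x, ~~ s); (x, s)] [::].
Proof. by have := geq_cancel o x (~~ s); rewrite negbK. Qed.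

Lemma inv_r w : G (w ++ winv w) [::].
Proof.
elim: w => [|[x s] w IH] /=; first exact: geq_refl.
rewrite winv_cons /=.
have := geq_ctx [:: (x, s)] [:: (x, ~~ s)] IH => /= H.
rewrite -catA in H. exact: Gt H (canc x s).
Qed.

Lemma inv_l w : G (winv w ++ w) [::].
Proof.
elim: w => [|[x s] w IH] /=; first exact: geq_refl.
rewrite winv_cons /= -catA /=.
have := geq_ctx (winv w) w (canc' x s) => /= H.
exact: Gt H IH.
Qed.

Lemma G_winv u v : G u v -> G (winv u) (winv v).
Proof.
move=> H.
have H1 : G (winv u) (winv u ++ v ++ winv v).
  by have := G_catl (winv u) (Gs (inv_r v)); rewrite cats0.
apply: Gt H1 _; rewrite catA.
have H2 := G_catr (winv v) (G_catl (winv u) (Gs H)).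
apply: Gt H2 _.
by have := G_catr (winv v) (inv_l u).
Qed.

Definition Cen c := forall v, G (c ++ v) (v ++ c).

Lemma Cen_cat a b : Cen a -> Cen b -> Cen (a ++ b).
Proof.
move=> Ha Hb v; rewrite -catA.
apply: Gt (G_catl a (Hb v)) _.
rewrite !catA.
exact: G_catr (Ha v).
Qed.

Lemma Cen_nil : Cen [::].
Proof. by move=> v; rewrite cats0; exact: geq_refl. Qed.

Lemma Cen_letters c :
  (forall y, G (c ++ [:: (y, false)]) ((y, false) :: c)) -> Cen c.
Proof.
move=> H.
have Hl : forall l, G (c ++ [:: l]) (l :: c).
  move=> [y [|]]; last exact: H.
  (* c ++ [yi] ~ [yi; y] ++ c ++ [yi] ~ [yi] ++ c ++ [y; yi] ~ [yi] ++ c *)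
  have E1 : G (c ++ [:: (y, true)]) ([:: (y, true); (y, false)] ++ c ++ [:: (y, true)]).
    exact: Gs (geq_ctx [::] (c ++ [:: (y, true)]) (canc y true)).
  apply: Gt E1 _.
  have E2 := geq_ctx [:: (y, true)] [:: (y, true)] (H y).
  have E3 : G [:: (y, true), (y, false) & c ++ [:: (y, true)]]
              [:: (y, true) & c ++ [:: (y, false); (y, true)]].
    by move: E2 => /Gs; rewrite /= -catA.
  apply: Gt E3 _.
  have := geq_ctx ((y, true) :: c) [::] (canc y false).
  by rewrite /= !cats0.
elim=> [|l v IH]; first by rewrite cats0; exact: geq_refl.
have E := G_catr v (Hl l).
rewrite -catA /= in E.
apply: Gt E _.
by have := G_catl [:: l] IH.
Qed.

Lemma Cen_inv c : Cen c -> Cen (winv c).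
Proof.
move=> H v.
have E1 : G (winv c ++ v) (winv c ++ (c ++ v ++ winv c)).
  have := G_catl (winv c ++ v) (Gs (inv_r c)); rewrite cats0 -!catA.
  move=> E; apply: Gt E _; apply: G_catl; rewrite !catA; apply: G_catr.
  exact: Gs (H v).
apply: Gt E1 _.
rewrite catA.
have := G_catr (v ++ winv c) (inv_l c); exact.
Qed.

Lemma Cen_move k x y : Cen k -> G (x ++ k ++ y) (k ++ x ++ y).
Proof.
move=> H; rewrite !catA; apply: G_catr; exact: Gs (H x).
Qed.

End Gen.

Lemma wmap_winv (A B : Type) (f : A -> B) w : wmap f (winv w) = winv (wmap f w).
Proof. by rewrite /wmap /winv map_rev -!map_comp. Qed.

Lemma wmap_cat (A B : Type) (f : A -> B) u v : wmap f (u ++ v) = wmap f u ++ wmap f v.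
Proof. exact: map_cat. Qed.

Section Spec.
Variables (X : Type) (op : X -> X -> X).
Local Notation P := (prod_op op trivial_op).
Local Notation G := (gamma_eq P).
Local Notation s := (wmap (fun x : X => (x, false))).
Local Notation p := (wmap (fun q : X * bool => q.1)).

Lemma hom_s u v : gamma_eq op u v -> G (s u) (s v).
Proof.
elim=> {u v}.
- move=> w; exact: geq_refl.
- move=> u v _ H; exact: geq_sym.
- move=> u v w _ H1 _ H2; exact: geq_trans H1 H2.
- move=> a b u v _ H; rewrite !wmap_cat; exact: geq_ctx.
- move=> x b; exact: geq_cancel.
- move=> x y; exact: (geq_rel P (x, false) (y, false)).
Qed.

Lemma hom_p u v : G u v -> gamma_eq op (p u) (p v).
Proof.
elim=> {u v}.
- move=> w; exact: geq_refl.
- move=> u v _ H; exact: geq_sym.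
- move=> u v w _ H1 _ H2; exact: geq_trans H1 H2.
- move=> a b u v _ H; rewrite !wmap_cat; exact: geq_ctx.
- move=> x b; exact: geq_cancel.
- move=> [x a] [y b]; exact: (geq_rel op x y).
Qed.

Lemma relP z a x b :
  G [:: ((x, b), true); ((z, a), false); ((x, b), false)] [:: ((op z x, a), false)].
Proof. exact: (geq_rel P (z, a) (x, b)). Qed.

Definition cx x : word (X * bool) := [:: ((x, true), false); ((x, false), true)].

Lemma Cen_cx x : Cen P (cx x).
Proof.
apply: Cen_letters => -[z a].
(* [X1; X0i; Z] ~ [X1; Z'; X0i] ~ [Z; X1; X0i] *)
have S1 : G [:: ((x, false), true); ((z, a), false)]
            [:: ((op z x, a), false); ((x, false), true)].
  have E : G [:: ((x, false), true); ((z, a), false)]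
             [:: ((x, false), true); ((z, a), false); ((x, false), false); ((x, false), true)].
    exact: Gs (geq_ctx [:: ((x, false), true); ((z, a), false)] [::] (canc P (x, false) false)).
  apply: Gt E _.
  exact: (geq_ctx [::] [:: ((x, false), true)] (relP z a x false)).
have S2 : G [:: ((x, true), false); ((op z x, a), false)]
            [:: ((z, a), false); ((x, true), false)].
  have E := geq_ctx [:: ((x, true), false)] [::] (Gs (relP z a x true)).
  apply: Gt E _.
  exact: (geq_ctx [::] [:: ((z, a), false); ((x, true), false)] (canc P (x, true) false)).
have := geq_ctx [:: ((x, true), false)] [::] S1 => /= E.
apply: Gt E _.
exact: (geq_ctx [::] [:: ((x, false), true)] S2).
Qed.

Lemma decomp w : exists k, Cen P k /\ G w (s (p w) ++ k).
Proof.
elim: w => [|[[x a] e] w [k [Ck IH]]].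
  by exists [::]; split; [exact: Cen_nil | exact: geq_refl].
case: a.
- case: e.
  + exists (winv (cx x) ++ k); split; first exact: Cen_cat (Cen_inv (Cen_cx x)) Ck.
    have E1 : G [:: ((x, true), true)] ([:: ((x, false), true)] ++ winv (cx x)).
      exact: Gs (geq_ctx [::] [:: ((x, true), true)] (canc P (x, false) true)).
    have E2 := G_cat E1 IH.
    apply: Gt E2 _; rewrite -catA /=.
    apply: (G_catl [:: ((x, false), true)]).
    exact: Gs (@Cen_move _ P _ (s (p w)) k (Cen_inv (Cen_cx x))).
  + exists (cx x ++ k); split; first exact: Cen_cat (Cen_cx x) Ck.
    have E1 : G [:: ((x, true), false)] (cx x ++ [:: ((x, false), false)]).
      exact: Gs (geq_ctx [:: ((x, true), false)] [::] (canc P (x, false) true)).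
    have E1' : G [:: ((x, true), false)] ([:: ((x, false), false)] ++ cx x).
      apply: Gt E1 _; exact: Cen_cx.
    have E2 := G_cat E1' IH.
    apply: Gt E2 _; rewrite -catA /=.
    apply: (G_catl [:: ((x, false), false)]).
    exact: Gs (@Cen_move _ P _ (s (p w)) k (Cen_cx x)).
- exists k; split=> //.
  exact: (G_catl [:: ((x, false), e)] IH).
Qed.

Lemma keyB w : in_comm P w -> G w (s (p w)).
Proof.
elim=> {w}.
- exact: geq_refl.
- move=> u v.
  have [k [Ck Hu]] := decomp u.
  have [m [Cm Hv]] := decomp v.
  rewrite /wcomm !wmap_cat !wmap_winv.
  set A := s (p u) in Hu *; set B := s (p v) in Hv *.
  have Hui := G_winv Hu; have Hvi := G_winv Hv.
  rewrite !winv_cat in Hui Hvi.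
  have E := G_cat Hui (G_cat Hvi (G_cat Hu Hv)).
  apply: Gt E _.
  have Ck' := Cen_inv Ck; have Cm' := Cen_inv Cm.
  rewrite -!catA.
  set K1 := winv k; set M1 := winv m; set A' := winv A; set B' := winv B.
  apply: Gt (G_catl K1 (@Cen_move _ P M1 A' (B' ++ A ++ k ++ B ++ m) Cm')) _.
  have E := G_catl (K1 ++ M1) (@Cen_move _ P k (A' ++ B' ++ A) (B ++ m) Ck).
  rewrite -!catA in E; apply: Gt E _.
  have E := G_catl (K1 ++ M1 ++ k) (@Cen_move _ P m (A' ++ B' ++ A ++ B) [::] Cm).
  rewrite !cats0 -!catA in E; apply: Gt E _.
  suff H : G (K1 ++ M1 ++ k ++ m) [::].
    by have := G_catr (A' ++ B' ++ A ++ B) H; rewrite -!catA.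
  have E := G_catl K1 (G_catr m (Cm' k)).
  rewrite -!catA in E; apply: Gt E _.
  rewrite catA.
  have E2 := G_catr (winv m ++ m) (inv_l P k). apply: Gt E2 _.
  exact: inv_l.
- move=> u v _ Hu _ Hv; rewrite wmap_cat wmap_cat; exact: G_cat.
- move=> u _ Hu; rewrite !wmap_winv; exact: G_winv.
- move=> u v Huv _ Hu.
  apply: Gt (Gs Huv) _; apply: Gt Hu _; exact: hom_s (hom_p Huv).
Qed.

End Spec.

Theorem proposition4p26 (X : Type) (op : X -> X -> X) (HX : is_rack op)
  (w1 w2 : word (prod X bool)) :
  in_comm (prod_op op trivial_op) w1 ->
  in_comm (prod_op op trivial_op) w2 ->
  gamma_eq op (wmap (fun p : prod X bool => p.1) w1) (wmap (fun p : prod X bool => p.1) w2) ->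
  gamma_eq trivial_op (wmap (fun p : prod X bool => p.2) w1) (wmap (fun p : prod X bool => p.2) w2) ->
  gamma_eq (prod_op op trivial_op) w1 w2.
Proof.
move=> H1 H2 H _.
apply: Gt (keyB H1) _; apply: Gt (Gs (keyB H2)).
exact: hom_s H.
Qed.
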